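(* Let $k=\mathbb{F}_q$ with $q=2^m\geq 4$ and let $n\geq 1$. Then every element of $\mathrm{PGL}_{n+1}(k)$ induces an even permutation of $\mathbb{P}^n(k)$. *)

(* Defs.v *)
From mathcomp Require Import all_boot all_order all_algebra all_fingroup.
Set Implicit Arguments. Unset Strict Implicit. Unset Printing Implicit Defensive.
Import GRing.Theory.
Local Open Scope ring_scope.

(* Projective space P^n(k) over a finite field k: the set of 1-dimensional
   subspaces (lines through 0) of k^(n+1), represented as row vectors. *)
Section Proj.
Variables (k : finFieldType) (n : nat).

Definition line_of (v : 'rV[k]_n.+1) : {set 'rV[k]_n.+1} := [set c *: v | c : k].

Definition is_proj_point (L : {set 'rV[k]_n.+1}) : bool :=
  [exists v : 'rV[k]_n.+1, (v != 0) && (L == line_of v)].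

Definition proj_space : finType := {L : {set 'rV[k]_n.+1} | is_proj_point L}.

(* The (set-theoretic) image of a line under the linear map u |-> u *m A
   (row-vector convention); for A invertible this is again a line. *)
Definition mx_line_image (A : 'M[k]_n.+1) (L : {set 'rV[k]_n.+1})
  : {set 'rV[k]_n.+1} := [set u *m A | u in L].
End Proj.

(* Main.v *)
Require Import Defs.
From mathcomp Require Import all_boot all_order all_algebra all_fingroup all_field.
Set Implicit Arguments. Unset Strict Implicit. Unset Printing Implicit Defensive.
Import GRing.Theory.
Local Open Scope ring_scope.

Section S.
Variables (k : finFieldType) (n : nat).
Local Notation P := (proj_space k n).
Local Notation M := 'M[k]_n.+1.

Lemma img_line (A : M) v : mx_line_image A (line_of v) = line_of (v *m A).
Proof.
rewrite /mx_line_image /line_of -imset_comp; apply: eq_imset => c /=.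
by rewrite scalemxAl.
Qed.

Lemma img_proj (A : M) (L : P) : A \in unitmx -> is_proj_point (mx_line_image A (val L)).
Proof.
move=> hA; case: L => L /= /existsP [v /andP [v0 /eqP ->]].
apply/existsP; exists (v *m A); rewrite img_line eqxx andbT.
apply: contra v0 => /eqP h; apply/eqP.
by rewrite -(mulmxK hA v) h mul0mx.
Qed.

Definition Au (A : M) : M := if A \in unitmx then A else 1%:M.
Lemma AuU A : Au A \in unitmx.
Proof. by rewrite /Au; case: ifP => // _; exact: unitmx1. Qed.

Definition pimg (A : M) (L : P) : P := insubd L (mx_line_image A (val L)).

Lemma pimgE A L : A \in unitmx -> val (pimg A L) = mx_line_image A (val L).
Proof. by move=> hA; rewrite /pimg insubdK //; exact: img_proj. Qed.

Lemma imgM (A B : M) S : mx_line_image (A *m B) S = mx_line_image B (mx_line_image A S).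
Proof.
rewrite /mx_line_image -imset_comp; apply: eq_imset => u /=; by rewrite mulmxA.
Qed.

Lemma img1 S : mx_line_image (1%:M : M) S = S.
Proof.
rewrite /mx_line_image (eq_imset (g := id)) ?imset_id // => u; exact: mulmx1.
Qed.

Lemma pimgK A : A \in unitmx -> cancel (pimg A) (pimg (invmx A)).
Proof.
move=> hA L; apply: val_inj; rewrite !pimgE ?unitmx_inv // -imgM mulmxV //.
exact: img1.
Qed.

Definition pperm (A : M) : {perm P} := perm (can_inj (pimgK (AuU A))).
Definition chi (A : M) : bool := odd_perm (pperm A).

Lemma ppermE A L : A \in unitmx -> val (pperm A L) = mx_line_image A (val L).
Proof. by move=> hA; rewrite permE /Au hA pimgE. Qed.

Lemma ppermM A B : A \in unitmx -> B \in unitmx ->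
  pperm (A *m B) = (pperm A * pperm B)%g.
Proof.
move=> hA hB; apply/permP => L; apply: val_inj.
have hAB : A *m B \in unitmx by rewrite unitmx_mul hA.
by rewrite permM !ppermE // imgM.
Qed.

Lemma chiM A B : A \in unitmx -> B \in unitmx -> chi (A *m B) = chi A (+) chi B.
Proof. by move=> hA hB; rewrite /chi ppermM // odd_permM. Qed.

Lemma chi1 : chi (1%:M : M) = false.
Proof.
rewrite /chi; have -> : pperm (1%:M : M) = 1%g.
  apply/permP => L; apply: val_inj; by rewrite ppermE ?unitmx1 // img1 perm1.
exact: odd_perm1.
Qed.


Lemma unitmx_of (A B : M) : A *m B = 1%:M -> A \in unitmx.
Proof. by move/mulmx1_unit=> []. Qed.

Lemma chiX (A : M) e : A \in unitmx -> chi (A ^+ e) = odd e && chi A.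
Proof.
move=> hA; elim: e => [|e IH]; first by rewrite expr0 chi1.
have hU : A ^+ e \in unitmx.
  elim: e {IH} => [|e IH]; first by rewrite expr0 unitmx1.
  by rewrite exprS -mulmxE unitmx_mul hA.
rewrite exprS -mulmxE chiM // IH /=.
by case: (chi A); case: (odd e).
Qed.

Lemma diagX (d : 'rV[k]_n.+1) e : diag_mx d ^+ e = diag_mx (\row_j d 0 j ^+ e).
Proof.
elim: e => [|e IH].
  rewrite expr0; transitivity (1%:M : M); first by [].
  rewrite -diag_const_mx; congr diag_mx; apply/rowP => j; by rewrite !mxE.
rewrite exprS IH -mulmxE mulmx_diag; congr diag_mx; apply/rowP => j; by rewrite !mxE exprS.
Qed.

Lemma chi_diag (d : 'rV[k]_n.+1) : odd #|k|.-1 -> (forall j, d 0 j != 0) -> chi (diag_mx d) = false.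
Proof.
move=> ho hd.
have hU : diag_mx d \in unitmx.
  apply: (@unitmx_of _ (diag_mx (\row_j (d 0 j)^-1))).
  rewrite mulmx_diag -diag_const_mx; congr diag_mx; apply/rowP => j.
  by rewrite !mxE mulfV.
have := chiX #|k|.-1 hU; rewrite ho /= => <-.
rewrite diagX.
have -> : \row_j d 0 j ^+ #|k|.-1 = const_mx 1.
  apply/rowP => j; rewrite !mxE.
  have := expf_card (d 0 j).
  have hk : #|k| = (#|k|.-1).+1 by rewrite prednK //; apply/card_gt0P; by exists 0.
  rewrite {1}hk exprS => h.
  apply: (mulfI (hd j)); by rewrite h mulr1.
by rewrite diag_const_mx chi1.
Qed.

Lemma chi_tv (a : 'cV[k]_n.+1) (b z : 'rV[k]_n.+1) (lam : k) :
  z *m a = 1%:M -> b *m a = 0 -> lam != 0 -> lam != 1 ->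
  chi (1%:M + a *m b) = false.
Proof.
move=> za ba l0 l1.
have l1' : lam - 1 != 0 by rewrite subr_eq0.
set mu := (lam - 1)^-1.
set T := fun c : k => (1%:M : M) + c *: (a *m b).
have TT c d : T c *m T d = T (c + d).
  rewrite /T mulmxDl mul1mx mulmxDr mulmx1 -scalemxAl -!scalemxAr.
  rewrite !mulmxA -(mulmxA a b a) ba mulmx0 mul0mx !scaler0 addr0 scalerDl.
  by rewrite -addrA (addrC (d *: _)).
have TU c : T c \in unitmx.
  apply: (@unitmx_of _ (T (- c))); rewrite TT subrr /T scale0r addr0 //.
set D : M := 1%:M + (lam - 1) *: (a *m z).
have Da : D *m a = lam *: a.
  rewrite /D mulmxDl mul1mx -scalemxAl -mulmxA za mulmx1 scalerBl scale1r.
  by rewrite addrC subrK.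
have bD : b *m D = b.
  by rewrite /D mulmxDr mulmx1 -scalemxAr mulmxA ba mul0mx scaler0 addr0.
have DU : D \in unitmx.
  apply: (@unitmx_of _ (1%:M + (lam^-1 - 1) *: (a *m z))).
  rewrite mulmxDr mulmx1 -scalemxAr mulmxA Da -scalemxAl.
  rewrite scalerA /D -addrA -scalerDl.
  have -> : lam - 1 + (lam^-1 - 1) * lam = 0.
    by rewrite mulrBl mulVf // mul1r addrA subrK subrr.
  by rewrite scale0r addr0.
have rel : D *m T mu = T mu *m T 1 *m D.
  rewrite TT /T mulmxDr mulmx1 -scalemxAr mulmxA Da -scalemxAl scalerA.
  rewrite mulmxDl mul1mx -scalemxAl -mulmxA bD.
  congr (_ + (_ *: _)); rewrite /mu.
  apply: (mulfI l1'); by rewrite mulrA mulfV // mul1r mulrDr mulfV // mulr1 addrC subrK.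
have := congr1 chi rel; rewrite !chiM ?unitmx_mul ?TU ?DU //.
have -> : T 1 = 1%:M + a *m b by rewrite /T scale1r.
by case: (chi D); case: (chi (T mu)); case: (chi (1%:M + a *m b)).
Qed.

Lemma tvU (a : 'cV[k]_n.+1) (b : 'rV[k]_n.+1) : b *m a = 0 -> (1%:M + a *m b : M) \in unitmx.
Proof.
move=> ba; apply: (@unitmx_of _ (1%:M - a *m b)).
rewrite mulmxDl mul1mx mulmxDr mulmx1 mulmxN !mulmxA -(mulmxA a b a) ba mulmx0 mul0mx.
by rewrite subr0 subrK.
Qed.

Lemma ba0 (j0 : 'I_n.+1) (b : 'rV[k]_n.+1) : b 0 j0 = 0 -> b *m (delta_mx j0 (0 : 'I_1) : 'cV[k]_n.+1) = 0.
Proof. by move=> h; rewrite -colE; apply/matrixP => i j; rewrite !ord1 !mxE h. Qed.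

Lemma chi_tvd (j0 : 'I_n.+1) (b : 'rV[k]_n.+1) (lam : k) : b 0 j0 = 0 -> lam != 0 -> lam != 1 ->
  chi (1%:M + delta_mx j0 0 *m b) = false.
Proof.
move=> h l0 l1; apply: (@chi_tv _ _ (delta_mx 0 j0) lam) => //; last exact: ba0.
rewrite mul_delta_mx; apply/matrixP => i j; by rewrite !ord1 !mxE.
Qed.

Lemma tvdE (B : M) (j0 : 'I_n.+1) (b : 'rV[k]_n.+1) i j :
  (B *m (1%:M + delta_mx j0 0 *m b)) i j = B i j + B i j0 * b 0 j.
Proof. by rewrite mulmxDr mulmx1 mulmxA -colE !mxE big_ord1 !mxE. Qed.

Lemma diagU (d : 'rV[k]_n.+1) : (forall j, d 0 j != 0) -> diag_mx d \in unitmx.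
Proof.
move=> hd; apply: (@unitmx_of _ (diag_mx (\row_j (d 0 j)^-1))).
rewrite mulmx_diag -diag_const_mx; congr diag_mx; apply/rowP => j.
by rewrite !mxE mulfV.
Qed.

Lemma sum_delta (j : 'I_n.+1) (x : k) : \sum_(i < n.+1) ((i == j)%:R * x) = x.
Proof.
rewrite (bigD1 j) //= eqxx mul1r big1 ?addr0 // => i /negbTE ->; by rewrite mul0r.
Qed.

Lemma chi0 (A : M) (lam : k) : odd #|k|.-1 -> lam != 0 -> lam != 1 -> A \in unitmx -> chi A = false.
Proof.
move=> ho l0 l1 hA.
suff H : forall kk, (kk <= n.+1)%N -> exists B : M, [/\ B \in unitmx, chi B = chi A &
   forall i j : 'I_n.+1, (i < kk)%N -> B i j = (i == j)%:R].
  have [B [hB <- hI]] := H n.+1 (leqnn _).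
  have -> : B = 1%:M by apply/matrixP => i j; rewrite hI // mxE.
  exact: chi1.
elim => [|kk IH] hk; first by exists A.
have [B [hB hc hI]] := IH (ltnW hk).
pose K : 'I_n.+1 := Ordinal hk.
have [j hj hBj] : exists2 j : 'I_n.+1, (kk <= j)%N & B K j != 0.
  case: (pickP [pred j : 'I_n.+1 | (kk <= j)%N && (B K j != 0)]) => [j /andP [h1 h2]|h0].
    by exists j.
  pose u : 'rV[k]_n.+1 := \row_i ((i == K)%:R - (if (i < kk)%N then B K i else 0)).
  have uB : u *m B = 0.
    apply/rowP => x; rewrite !mxE.
    under eq_bigr => i _ do rewrite !mxE mulrBl.
    rewrite big_split /= sumrN.
    have -> : \sum_(i < n.+1) (i == K)%:R * B i x = \sum_(i < n.+1) (i == K)%:R * B K x.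
      apply: eq_bigr => i _; by case: eqP => [->|]; rewrite ?mul0r.
    rewrite sum_delta.
    have -> : \sum_(i < n.+1) (if (i < kk)%N then B K i else 0) * B i x =
              \sum_(i < n.+1) (i == x)%:R * (if (x < kk)%N then B K x else 0).
      apply: eq_bigr => i _; case: ltnP => hi.
        rewrite (hI i x hi); case: (eqVneq i x) => [<-|ne]; first by rewrite ?eqxx hi mulr1 mul1r.
        by rewrite /= mulr0n mulr0 mul0r.
      case: (eqVneq i x) => [<-|ne]; last by rewrite /= mulr0n !mul0r.
      by rewrite ltnNge hi /= mul0r mulr0.
    rewrite sum_delta; case: ltnP => hx; first by rewrite subrr.
    have := h0 x; rewrite /= hx /= => /negbFE/eqP ->; by rewrite subrr.
  have u0 : u = 0 by rewrite -(mulmxK hB u) uB mul0mx.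
  have := congr1 (fun v : 'rV[k]_n.+1 => v 0 K) u0; rewrite !mxE eqxx ltnn subr0 => /eqP.
  by rewrite oner_eq0.
have [B1 [hB1 hc1 hI1 hKK]] : exists B1 : M, [/\ B1 \in unitmx, chi B1 = chi A,
   forall i j : 'I_n.+1, (i < kk)%N -> B1 i j = (i == j)%:R & B1 K K != 0].
  case: (boolP (B K K != 0)) => hK; first by exists B.
  have hjK : j != K.
    by apply: contra hK => /eqP e; rewrite e in hBj.
  have h0 : (delta_mx 0 K : 'rV[k]_n.+1) 0 j = 0 by rewrite mxE (negbTE hjK) andbF.
  exists (B *m (1%:M + delta_mx j 0 *m (delta_mx 0 K : 'rV[k]_n.+1))); split.
  - by rewrite unitmx_mul hB tvU // ba0.
  - by rewrite chiM ?tvU ?ba0 // (chi_tvd h0 l0 l1) addbF.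
  - move=> i x hi; rewrite tvdE (hI i x hi) (hI i j hi).
    have -> : (i == j) = false.
      apply/negbTE; apply: contraTneq (leq_trans hi hj) => ->; by rewrite ltnn.
    by rewrite mul0r addr0.
  - rewrite tvdE !mxE !eqxx mulr1; move/negbNE: hK => /eqP ->; by rewrite add0r.
pose b2 : 'rV[k]_n.+1 := \row_x (if x == K then 0 else - (B1 K x / B1 K K)).
have hb2 : b2 0 K = 0 by rewrite mxE eqxx.
pose B2 := B1 *m (1%:M + delta_mx K 0 *m b2).
have hB2 : B2 \in unitmx by rewrite unitmx_mul hB1 tvU // ba0.
have hc2 : chi B2 = chi A by rewrite chiM ?tvU ?ba0 // (chi_tvd hb2 l0 l1) addbF.
have hI2 (i x : 'I_n.+1) : (i < kk)%N -> B2 i x = (i == x)%:R.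
  move=> hi; rewrite tvdE (hI1 i x hi) (hI1 i K hi).
  have -> : (i == K) = false by apply/negbTE; apply: contraTneq hi => ->; rewrite ltnn.
  by rewrite mul0r addr0.
have hK2 (x : 'I_n.+1) : B2 K x = if x == K then B1 K K else 0.
  rewrite tvdE !mxE; case: eqP => [->|_]; first by rewrite mulr0 addr0.
  by rewrite mulrN mulrCA mulfV // mulr1 subrr.
pose d : 'rV[k]_n.+1 := \row_x (if x == K then (B1 K K)^-1 else 1).
have hd (x : 'I_n.+1) : d 0 x != 0 by rewrite mxE; case: ifP => _; rewrite ?invr_eq0 ?oner_eq0.
exists (B2 *m diag_mx d); split.
- by rewrite unitmx_mul hB2 diagU.
- by rewrite chiM ?diagU // chi_diag // addbF.
- move=> i x; rewrite ltnS leq_eqVlt => /orP [/eqP e|hi]; rewrite mul_mx_diag mxE [d 0 x]mxE.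
    have -> : i = K by apply: val_inj.
    rewrite hK2; case: (eqVneq x K) => [_|ne] /=; by rewrite ?mulfV ?mul0r ?mulr0n.
  rewrite (hI2 i x hi); case: (eqVneq i x) => [<-|ne] /=; last by rewrite mulr0n mul0r.
  have -> : (i == K) = false by apply/negbTE; apply: contraTneq hi => ->; rewrite ltnn.
  by rewrite mulr1.
Qed.

End S.

Theorem proposition3p5 (k : finFieldType) (m n : nat)
  (hq : #|k| = (2 ^ m)%N) (hq4 : (4 <= #|k|)%N) (hn : (1 <= n)%N)
  (A : 'M[k]_n.+1) (hA : A \in unitmx) :
  exists s : {perm proj_space k n},
    (forall L : proj_space k n, val (s L) = mx_line_image A (val L))
    /\ ~~ odd_perm s.
Proof.
exists (pperm A); split; first by move=> L; rewrite ppermE.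
have ho : odd #|k|.-1.
  have hm : m != 0%N by apply: contraTneq hq4 => e; rewrite hq e.
  have hpos : (0 < #|k|)%N by apply: leq_trans hq4.
  have : odd #|k| = false by rewrite hq oddX (negbTE hm).
  by rewrite -(prednK hpos) /= => /negbT; rewrite negbK.
case: (pickP [pred x : k | (x != 0) && (x != 1)]) => [lam /andP[l0 l1]|h].
  by apply/negP; rewrite -/(chi A) (chi0 ho l0 l1 hA).
exfalso.
have : (#|k| <= #|[set (0%R : k); (1%R : k)]|)%N.
  apply: subset_leq_card; apply/subsetP => x _; rewrite !inE.
  by move: (h x) => /= /negbT; rewrite negb_and !negbK.
rewrite cards2 => H; have := leq_trans hq4 H; by case: (_ != _).
Qed.
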